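(* Let $n\geq 5$ and let $S$ be the set of all $3$-cycles in $S_n$. Let $CAG_n=\mathrm{Cay}(A_n,S)$ be the complete alternating group graph. Then $$\mathrm{Aut}(CAG_n)=(R(A_n)\rtimes \mathrm{Inn}(S_n))\rtimes \mathbb{Z}_2\cong (A_n\rtimes S_n)\rtimes \mathbb{Z}_2,$$ where $R(A_n)$ is the right regular representation of $A_n$, $\mathrm{Inn}(S_n)$ is the inner automorphism group of $S_n$ (acting on $A_n$ by conjugation), and $\mathbb{Z}_2=\langle h\rangle$ with $h$ the map $\alpha\mapsto\alpha^{-1}$ for all $\alpha\in A_n$.
   Context: For a finite group $\Gamma$ and a subset $T\subseteq\Gamma$ with $e\notin T$ and $T=T^{-1}$, the Cayley graph $\mathrm{Cay}(\Gamma,T)$ is the undirected graph with vertex set $\Gamma$ and edge set $\{\{\gamma,t\gamma\}\mid \gamma\in\Gamma, t\in T\}$. The right regular representation is $R(\Gamma)=\{r_\gamma: x\mapsto x\gamma\mid\gamma\in\Gamma\}$, a subgroup of the automorphism group of the Cayley graph. $A_n$ and $S_n$ denote the alternating and symmetric groups of degree $n$. *)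

(* Defs.v *)
From mathcomp Require Import all_boot all_fingroup all_solvable.
Set Implicit Arguments. Unset Strict Implicit. Unset Printing Implicit Defensive.
Local Open Scope group_scope.

(* Vertex set of CAG_n: the elements of A_n, as the finite group type [subg 'Alt]. *)
Definition V (n : nat) : finGroupType := subg_of ('Alt_('I_n))%G.

Definition is3cycle (n : nat) (s : 'S_n) : bool :=
  [exists a : 'I_n, exists b : 'I_n, exists c : 'I_n,
    [&& a != b, b != c, a != c,
        s a == b, s b == c, s c == a &
        [forall i : 'I_n, (i \notin [:: a; b; c]) ==> (s i == i)]]].

(* Cay(A_n, S): {x, y} is an edge iff y = t x for some 3-cycle t, i.e. y x^-1 in S. *)
Definition cag_adj (n : nat) (x y : V n) : bool :=
  is3cycle (sgval y * (sgval x)^-1).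

Definition CAGAut (n : nat) : {set {perm V n}} :=
  [set f : {perm V n} | [forall x : V n, forall y : V n,
      cag_adj (f x) (f y) == cag_adj x y]].

Definition RA (n : nat) : {set {perm V n}} :=
  [set f : {perm V n} | [exists g : V n, [forall x : V n, f x == x * g]]].

Definition InnS (n : nat) : {set {perm V n}} :=
  [set f : {perm V n} | [exists s : 'S_n,
      [forall x : V n, sgval (f x) == (sgval x) ^ s]]].

Definition hinv (n : nat) : {perm V n} := perm (@invg_inj (V n)).

(* Main.v *)
Require Import Defs.
From mathcomp Require Import all_boot all_fingroup all_solvable.
Set Implicit Arguments. Unset Strict Implicit. Unset Printing Implicit Defensive.
Local Open Scope group_scope.


Section Cyc.
Variable n : nat.
Implicit Types s t u v w : 'S_n.
Implicit Types a b c d x y z p q : 'I_n.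

Inductive c3data s a b c : Prop :=
  C3D of a != b & b != c & a != c & s a = b & s b = c & s c = a &
      (forall p, p != a -> p != b -> p != c -> s p = p).

Lemma c3E3 s : is3cycle s -> exists a b c, c3data s a b c.
Proof.
case/existsP=> a /existsP[b /existsP[c]].
move=> /andP[ab /andP[bc /andP[ac /andP[/eqP sa /andP[/eqP sb /andP[/eqP sc /forallP fx]]]]]].
exists a, b, c; constructor=> // p pa pb pc; apply/eqP; move: (fx p).
by rewrite !inE (negbTE pa) (negbTE pb) (negbTE pc).
Qed.

Lemma c3I s a b c : c3data s a b c -> is3cycle s.
Proof.
case=> ab bc ac sa sb sc fx; apply/existsP; exists a; apply/existsP; exists b.
apply/existsP; exists c; rewrite ab bc ac sa sb sc !eqxx /=.
apply/forallP=> p; apply/implyP; rewrite !inE => /norP[pa /norP[pb pc]].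
by rewrite fx.
Qed.

Lemma c3rot s a b c : c3data s a b c -> c3data s b c a.
Proof.
case=> ab bc ac sa sb sc fx; constructor; try done; try by rewrite eq_sym.
by move=> p pb pc pa; apply: fx.
Qed.

Lemma c3P s x : is3cycle s -> s x != x -> c3data s x (s x) (s (s x)).
Proof.
move=> /c3E3[a [b [c D]]] sx.
have D' := c3rot D; have D'' := c3rot D'.
case: (D) => ab bc ac sa sb sc fx.
case: (eqVneq x a) => [->|xa]; first by rewrite sa sb.
case: (eqVneq x b) => [->|xb]; first by rewrite sb sc.
case: (eqVneq x c) => [->|xc]; first by rewrite sc sa.
by rewrite fx ?eqxx in sx.
Qed.

Lemma invP s a b : s a = b -> s^-1 b = a.
Proof. by move<-; rewrite permK. Qed.

Lemma inv_fix s a : s a = a -> s^-1 a = a.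
Proof. exact: invP. Qed.

Lemma c3inv s : is3cycle s -> is3cycle s^-1.
Proof.
move=> /c3E3[a [b [c [ab bc ac sa sb sc fx]]]].
apply: (@c3I _ a c b); constructor; try done; try by rewrite eq_sym.
- exact: invP.
- exact: invP.
- exact: invP.
by move=> p pa pc pb; apply: inv_fix; apply: fx.
Qed.

Lemma c3invE s : is3cycle s^-1 = is3cycle s.
Proof.
apply/idP/idP; last exact: c3inv.
by move/c3inv; rewrite invgK.
Qed.

Lemma c3_not1 : ~~ is3cycle (1 : 'S_n).
Proof.
apply/negP=> /c3E3[a [b [c [ab _ _ sa _ _ _]]]].
by rewrite perm1 in sa; rewrite sa eqxx in ab.
Qed.

Lemma c3_odd s : is3cycle s -> s \in 'Alt_('I_n).
Proof.
move=> /c3E3[a [b [c [ab bc ac sa sb sc fx]]]].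
have -> : s = tperm a b * tperm a c.
  apply/permP=> p; rewrite permM.
  case: (eqVneq p a) => [->|pa]; first by rewrite tpermL tpermD // eq_sym.
  case: (eqVneq p b) => [->|pb]; first by rewrite tpermR tpermL.
  case: (eqVneq p c) => [->|pc]; first by rewrite (tpermD ac bc) tpermR.
  by rewrite fx // !tpermD // eq_sym.
by rewrite Alt_even odd_permM !odd_tperm ab ac.
Qed.

Lemma c3_eq s t x : is3cycle s -> is3cycle t -> s x != x ->
  t x = s x -> t (s x) = s (s x) -> t = s.
Proof.
move=> Cs Ct sx tx tsx.
have tx' : t x != x by rewrite tx.
case: (c3P Cs sx) => ab bc ac sa sb sc fx.
case: (c3P Ct tx'); rewrite tx tsx => _ _ _ _ _ tc fxt.
apply/permP=> p.
case: (eqVneq p x) => [->|px]; first by [].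
case: (eqVneq p (s x)) => [->|py]; first by [].
case: (eqVneq p (s (s x))) => [->|pz]; first by rewrite tc sc.
by rewrite fx // fxt.
Qed.

End Cyc.


Section Adj.
Variable n : nat.
Implicit Types s t u v w : 'S_n.
Implicit Types a b c d x y z p q : 'I_n.

Definition supp s := [set p | s p != p].

Lemma supp_c3 s a b c : c3data s a b c -> supp s = [set a; b; c].
Proof.
case=> ab bc ac sa sb sc fx; apply/setP=> p; rewrite !inE.
case: (eqVneq p a) => [->|pa]; first by rewrite sa eq_sym ab.
case: (eqVneq p b) => [->|pb]; first by rewrite sb eq_sym bc.
case: (eqVneq p c) => [->|pc]; first by rewrite sc ac.
by rewrite fx ?eqxx.
Qed.

Lemma card3 a b c : a != b -> b != c -> a != c -> #|[set a; b; c]| = 3.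
Proof.
move=> ab bc ac; rewrite -setUA cardsU1 cards2 !inE bc.
by rewrite negb_or ab ac.
Qed.

Lemma card4 a b c d : a != b -> a != c -> a != d -> b != c -> b != d -> c != d ->
  #|[set a; b; c; d]| = 4.
Proof.
move=> ab ac ad bc bd cd; rewrite -!setUA cardsU1 cardsU1 cards2 !inE cd.
by rewrite !negb_or ab ac ad bc bd.
Qed.

Lemma c3_card s : is3cycle s -> #|supp s| = 3.
Proof.
move=> /c3E3[a [b [c D]]]; rewrite (supp_c3 D).
by case: D => ab bc ac *; rewrite card3.
Qed.

Lemma c3_no4 s a b c d : is3cycle s ->
  a != b -> a != c -> a != d -> b != c -> b != d -> c != d ->
  s a != a -> s b != b -> s c != c -> s d != d -> False.
Proof.
move=> Cs ab ac ad bc bd cd sa sb sc sd.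
have : [set a; b; c; d] \subset supp s.
  apply/subsetP=> p; rewrite !inE -!orbA; by case/or4P=> /eqP->.
move/subset_leq_card; rewrite card4 // c3_card //.
Qed.

Definition A s t := is3cycle (t * s^-1).

Lemma suppA s t : supp (t * s^-1) = [set p | t p != s p].
Proof.
by apply/setP=> p; rewrite !inE permM (can2_eq (permKV s) (permK s)).
Qed.

Lemma A_sym s t : A s t = A t s.
Proof. by rewrite /A -c3invE invMg invgK. Qed.

Lemma A_irr s : ~~ A s s.
Proof. by rewrite /A mulgV c3_not1. Qed.

Lemma supp_perm s p : (s p \in supp s) = (p \in supp s).
Proof. by rewrite !inE (inj_eq perm_inj). Qed.

Lemma adjP s t : is3cycle s -> is3cycle t -> A s t <->
  (t = s^-1 \/ (t != s /\ exists x, t x = s x /\ s x != x)).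
Proof.
move=> Cs Ct; split.
  move=> At.
  case: (boolP [exists x, (t x == s x) && (s x != x)]) => [/existsP[x /andP[/eqP tx sx]] | nsh].
    right; split; last by exists x.
    apply/eqP=> ets; move: At; rewrite /A ets mulgV.
    by move/negP: (@c3_not1 n).
  left.
  have nsh' x : s x != x -> t x != s x.
    move=> sx; apply/negP=> /eqP tx; move/negP: nsh; apply; apply/existsP.
    by exists x; rewrite tx eqxx.
  have sub1 : supp s \subset supp (t * s^-1).
    by apply/subsetP=> x; rewrite suppA !inE; exact: nsh'.
  have eqD : supp s = supp (t * s^-1).
    by apply/eqP; rewrite eqEcard sub1 (c3_card Cs) (c3_card At).
  have subt : supp t \subset supp s.
    apply/subsetP=> x; rewrite inE => tx.
    case: (eqVneq (s x) x) => sx; last by rewrite inE sx.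
    by rewrite eqD suppA inE sx.
  apply/permP=> x.
  case: (eqVneq (s x) x) => sx.
    rewrite (inv_fix sx); apply/eqP; apply: contraT => tx.
    have : x \in supp s by apply: (subsetP subt); rewrite inE.
    by rewrite inE sx eqxx.
  have D := c3P Cs sx.
  have sinv : s^-1 x = s (s x) by apply: invP; case: D.
  rewrite sinv.
  have eqt : supp t = supp s.
    by apply/eqP; rewrite eqEcard subt (c3_card Cs) (c3_card Ct).
  have xt : x \in supp t by rewrite eqt inE.
  have : t x \in supp s by rewrite -eqt supp_perm.
  rewrite (supp_c3 D) !inE; case/orP=> [/orP[]|] /eqP //.
    by move=> txx; move: xt; rewrite inE txx eqxx.
  by move=> txs; move: (nsh' _ sx); rewrite txs eqxx.
move=> [-> | [nts [x [tx sx]]]].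
  case/c3E3: (Cs) => a [b [c [ab bc ac sa sb sc fx]]].
  apply: (@c3I _ _ a b c); constructor=> //; rewrite ?permM.
  - by rewrite (invP sc) (invP sb).
  - by rewrite (invP sa) (invP sc).
  - by rewrite (invP sb) (invP sa).
  move=> p pa pb pc; have fp := fx p pa pb pc.
  by rewrite permM !(inv_fix fp).
have D := c3P Cs sx; case: (D) => xy yz xz _ _ sz fxs.
have tx' : t x != x by rewrite tx.
have Dt := c3P Ct tx'; rewrite tx in Dt; case: (Dt) => _ yw xw _ _ tw fxt.
have wz : t (s x) != s (s x).
  apply: contra nts => /eqP h; apply/eqP; exact: (c3_eq Cs Ct sx tx h).
have sw : s (t (s x)) = t (s x).
  by apply: fxs; rewrite // eq_sym.
have tz : t (s (s x)) = s (s x).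
  by apply: fxt; rewrite // eq_sym.
apply: (@c3I _ _ (s x) (t (s x)) (s (s x))); constructor; rewrite ?permM //.
- by rewrite (inv_fix sw).
- by rewrite tw (invP sz).
- by rewrite tz (invP (erefl (s (s x)))).
move=> p py pw pz.
case: (eqVneq p x) => [->|px]; first by rewrite permM tx (invP (erefl (s x))).
by rewrite permM fxt // inv_fix // fxs.
Qed.

End Adj.


Section Gam.
Variable n : nat.
Implicit Types s t u v w : 'S_n.
Implicit Types a b c d x y z p q : 'I_n.

Lemma fresh4 a b c d : 5 <= n -> exists q, [&& q != a, q != b, q != c & q != d].
Proof.
move=> hn.
have le4 : #|[set a; b; c; d]| <= 4.
  rewrite -!setUA !cardsU1 cards1.
  by case: (_ \notin _); case: (_ \notin _); case: (_ \notin _).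
have : 0 < #|~: [set a; b; c; d]|.
  have := cardsC [set a; b; c; d]; rewrite card_ord => h.
  by rewrite -(ltn_add2l #|[set a; b; c; d]|) addn0 h (leq_ltn_trans le4).
case/card_gt0P=> q; rewrite !inE -!orbA => H.
by exists q; apply/and4P; split; apply: contraNneq H => ->; rewrite eqxx ?orbT.
Qed.

Definition c3 a b c : 'S_n := tperm a b * tperm a c.

Lemma c3_data a b c : a != b -> b != c -> a != c -> c3data (c3 a b c) a b c.
Proof.
move=> ab bc ac; constructor=> //; rewrite ?permM.
- by rewrite tpermL tpermD // eq_sym.
- by rewrite tpermR tpermL.
- by rewrite (tpermD ac bc) tpermR.
by move=> p pa pb pc; rewrite permM !tpermD // eq_sym.
Qed.

Lemma c3_c3 a b c : a != b -> b != c -> a != c -> is3cycle (c3 a b c).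
Proof. by move=> ab bc ac; apply: c3I (c3_data ab bc ac). Qed.

Lemma CN1 s u : is3cycle s -> is3cycle u -> ~ (A s u /\ A s^-1 u).
Proof.
move=> Cs Cu [Asu Asiu].
case/(adjP Cs Cu): Asu => [us | [nus [x [ux sx]]]].
  by move: Asiu; rewrite us (negbTE (A_irr _)).
case/(adjP (c3inv Cs) Cu): Asiu => [| [nusi [y [uy siy]]]].
  by rewrite invgK => E; rewrite E eqxx in nus.
have D := c3P Cs sx; case: (D) => xy yz xz _ _ sz fxs.
have ux' : u x != x by rewrite ux.
case: (c3P Cu ux'); rewrite ux => _ _ uxz _ _ _ _.
have sy : s y != y by apply: contra siy => /eqP h; rewrite (inv_fix h).
case: (eqVneq y x) => [yx | yx].
  by move: uy; rewrite yx ux (invP sz) => /eqP; rewrite (negbTE yz).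
case: (eqVneq y (s x)) => [ysx | ysx].
  move: uy; rewrite ysx (invP (erefl (s x))) => E.
  by rewrite E eqxx in uxz.
case: (eqVneq y (s (s x))) => [ysx2 | ysx2].
  move: uy; rewrite ysx2 (invP (erefl (s (s x)))) => E.
  by move: (perm_inj (etrans E (esym ux))) => /eqP; rewrite eq_sym (negbTE xz).
by rewrite fxs ?eqxx in sy.
Qed.

Lemma CN2 s t : 5 <= n -> is3cycle s -> is3cycle t -> A s t -> t != s^-1 ->
  exists u, [/\ is3cycle u, A s u & A t u].
Proof.
move=> hn Cs Ct Ast tsi.
case/(adjP Cs Ct): Ast => [E | [nts [x [tx sx]]]]; first by rewrite E eqxx in tsi.
have tx' : t x != x by rewrite tx.
case: (c3P Cs sx) => xy yz xz _ _ _ _.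
case: (c3P Ct tx'); rewrite tx => _ yw xw _ _ _ _.
have [q /and4P[qx qy qz qw]] := fresh4 x (s x) (s (s x)) (t (s x)) hn.
have xq : x != q by rewrite eq_sym.
have yq : s x != q by rewrite eq_sym.
have Cu := c3_c3 xy yq xq; have Du := c3_data xy yq xq.
exists (c3 x (s x) q); split=> //.
  apply/(adjP Cs Cu); right; split; last by exists x; case: Du.
  apply/eqP=> E; case: Du => _ _ _ _ uy _ _; rewrite E in uy.
  by rewrite -uy eqxx in qz.
apply/(adjP Ct Cu); right; split; last by exists x; case: Du; rewrite tx.
apply/eqP=> E; case: Du => _ _ _ _ uy _ _; rewrite E in uy.
by rewrite -uy eqxx in qw.
Qed.

Lemma moved_img u a : u a != a -> u (u a) != u a.
Proof. by apply: contra => /eqP /perm_inj ->. Qed.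

Lemma no_inv_share s t x : is3cycle s -> is3cycle t -> t != s ->
  t x = s x -> s x != x -> ~~ A t s^-1.
Proof.
move=> Cs Ct nts tx sx; apply/negP.
case/(adjP Ct (c3inv Cs)) => [E | [_ [q [sq tq]]]].
  by move: nts; rewrite -(invgK t) -E invgK eqxx.
have tx' : t x != x by rewrite tx.
case: (c3P Cs sx) => xy yz xz _ _ sz fxs.
case: (c3P Ct tx'); rewrite tx => _ yw xw _ _ tw fxt.
have wz : t (s x) != s (s x).
  apply: contra nts => /eqP h; apply/eqP; exact: (c3_eq Cs Ct sx tx h).
case: (eqVneq q x) => [qx | qx].
  by move: sq; rewrite qx tx (invP sz) => /eqP; rewrite eq_sym (negbTE yz).
case: (eqVneq q (s x)) => [qy | qy].
  by move: sq; rewrite qy (invP (erefl (s x))) => /eqP; rewrite (negbTE xw).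
case: (eqVneq q (t (s x))) => [qw | qw].
  have sw : s (t (s x)) = t (s x) by apply: fxs; rewrite // eq_sym.
  by move: sq; rewrite qw (inv_fix sw) tw => /eqP; rewrite eq_sym (negbTE xw).
by move: tq; rewrite fxt ?eqxx.
Qed.

Lemma LINE s t x u : is3cycle s -> is3cycle t -> is3cycle u -> t != s ->
  t x = s x -> s x != x ->
  [|| u == s, u == t | A s u && A t u] = (u x == s x).
Proof.
move=> Cs Ct Cu nts tx sx.
have tx' : t x != x by rewrite tx.
apply/idP/idP; last first.
  move=> /eqP ux.
  case: (eqVneq u s) => [->|us]; first by [].
  case: (eqVneq u t) => [->|ut]; first by rewrite orbT.
  apply/or3P; constructor 3; apply/andP; split.
    by apply/(adjP Cs Cu); right; split=> //; exists x.
  by apply/(adjP Ct Cu); right; split=> //; exists x; rewrite tx.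
case/or3P=> [/eqP->//|/eqP->|/andP[Asu Atu]]; first by rewrite tx.
case/(adjP Cs Cu): (Asu) => [E | [_ [p [up sp]]]].
  by move: Atu; rewrite E (negbTE (no_inv_share Cs Ct nts tx sx)).
case/(adjP Ct Cu): (Atu) => [E | [_ [q [uq tq]]]].
  have nst : s != t by rewrite eq_sym.
  by move: Asu; rewrite E (negbTE (no_inv_share Ct Cs nst (esym tx) tx')).
case: (c3P Cs sx) => xy yz xz _ _ sz fxs.
case: (c3P Ct tx'); rewrite tx => _ yw xw _ _ tw fxt.
have wz : t (s x) != s (s x).
  apply: contra nts => /eqP h; apply/eqP; exact: (c3_eq Cs Ct sx tx h).
case: (eqVneq p x) => [pe|px]; first by rewrite -pe up.
case: (eqVneq q x) => [qe|qx]; first by rewrite -qe uq qe tx.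
have py : p = s x \/ p = s (s x).
  case: (eqVneq p (s x)) => [|py]; first by left.
  case: (eqVneq p (s (s x))) => [|pz]; first by right.
  by move: sp; rewrite fxs ?eqxx.
have qy : q = s x \/ q = t (s x).
  case: (eqVneq q (s x)) => [|qy]; first by left.
  case: (eqVneq q (t (s x))) => [|qw]; first by right.
  by move: tq; rewrite fxt ?eqxx.
set y := s x in xy yz xz sz fxs yw xw tw fxt wz py qy up uq sp tq *.
set z := s y in yz xz sz fxs wz py up sp *.
set w := t y in yw xw tw fxt wz qy uq tq *.
have zw : z != w by rewrite eq_sym.
case: py => -> in up sp *; case: qy => -> in uq tq *.
- by move: uq; rewrite up => /eqP; rewrite (negbTE zw).
- exfalso; have uy : u y != y by rewrite up eq_sym.
  have uw : u w != w by rewrite uq tw.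
  have uz := moved_img uy; rewrite up in uz.
  have ux := moved_img uw; rewrite uq tw in ux.
  apply: (c3_no4 Cu _ _ _ _ _ _ uy uw uz ux) => //; by rewrite eq_sym.
- exfalso; have uz : u z != z by rewrite up sz.
  have uy : u y != y by rewrite uq eq_sym.
  have ux := moved_img uz; rewrite up sz in ux.
  have uw := moved_img uy; rewrite uq in uw.
  apply: (c3_no4 Cu _ _ _ _ _ _ uz uy ux uw) => //; by rewrite eq_sym.
by move: (perm_inj (etrans (etrans up sz) (esym (etrans uq tw)))) => /eqP; rewrite (negbTE zw).
Qed.

Lemma KDET a b c d : 5 <= n -> a != b -> c != d ->
  (forall v, is3cycle v -> v a = b -> v c = d) -> c = a /\ d = b.
Proof.
move=> hn ab cd H.
have [q1 /and4P[q1a q1b _ _]] := fresh4 a b a b hn.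
have [q2 /and4P[q2a q2b q21 _]] := fresh4 a b q1 q1 hn.
have bq1 : b != q1 by rewrite eq_sym.
have aq1 : a != q1 by rewrite eq_sym.
have bq2 : b != q2 by rewrite eq_sym.
have aq2 : a != q2 by rewrite eq_sym.
have D1 := c3_data ab bq1 aq1; have D2 := c3_data ab bq2 aq2.
have h1 := H _ (c3_c3 ab bq1 aq1); have h2 := H _ (c3_c3 ab bq2 aq2).
case: D1 => _ _ _ v1a v1b v1c f1; case: D2 => _ _ _ v2a v2b v2c f2.
have {}h1 := h1 v1a; have {}h2 := h2 v2a.
case: (eqVneq c a) => [ca | ca].
  by split=> //; rewrite -h1 ca.
exfalso.
case: (eqVneq c b) => [cb | cb].
  by move: h1 h2; rewrite cb v1b v2b => <- /eqP; rewrite (negbTE q21).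
case: (eqVneq c q1) => [cq | cq].
  move: h1 h2; have q12 : q1 != q2 by rewrite eq_sym.
  rewrite cq v1c (f2 _ q1a q1b q12) => <- /eqP.
  by rewrite eq_sym (negbTE aq1).
by move: h1; rewrite f1 // => /eqP; rewrite (negbTE cd).
Qed.

End Gam.


Section Sets.
Variable n : nat.
Implicit Types a b c d x y z p q r : 'I_n.
Implicit Types S : {set 'I_n}.

Lemma two_set2 S p r : #|S| = 2 -> p \in S -> r \in S -> p != r -> S = [set p; r].
Proof.
move=> cS pS rS pr; apply/eqP; rewrite eq_sym eqEcard cS cards2 pr leqnn andbT.
by apply/subsetP=> z; rewrite !inE => /orP[] /eqP->.
Qed.

Lemma two_set S c : #|S| = 2 -> c \in S -> exists2 p, p != c & S = [set c; p].
Proof.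
move=> cS cin.
have := cardsD1 c S; rewrite cin cS => h1.
have : 0 < #|S :\ c| by move: h1; rewrite add1n => -[<-].
case/card_gt0P=> p; rewrite !inE => /andP[pc pS].
exists p => //; apply: two_set2 => //; by rewrite eq_sym.
Qed.

Lemma set2_eq a b c d : a != b -> c != d -> [set a; b] = [set c; d] ->
  (a = c /\ b = d) \/ (a = d /\ b = c).
Proof.
move=> ab cd E.
have : a \in [set c; d] by rewrite -E !inE eqxx.
have : b \in [set c; d] by rewrite -E !inE eqxx orbT.
rewrite !inE => /orP[] /eqP bE /orP[] /eqP aE; subst.
- by rewrite eqxx in ab.
- by right.
- by left.
- by rewrite eqxx in ab.
Qed.

Lemma meet2 S c p : S :&: [set c; p] != set0 -> (c \in S) || (p \in S).
Proof.
by case/set0Pn=> z; rewrite !inE => /andP[zS /orP[] /eqP <-]; rewrite zS ?orbT.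
Qed.

Lemma fresh_ne x : 5 <= n -> exists y : 'I_n, y != x.
Proof. by move=> hn; have [q /and4P[h _ _ _]] := fresh4 x x x x hn; exists q. Qed.

Lemma CP (E : 'I_n -> {set 'I_n}) x : 5 <= n ->
  (forall y, y != x -> #|E y| = 2) ->
  (forall y z, y != x -> z != x -> y != z -> (E y != E z) && (E y :&: E z != set0)) ->
  exists c, forall y, y != x -> c \in E y.
Proof.
move=> hn cE mE.
have [y1 /and4P[y1x _ _ _]] := fresh4 x x x x hn.
have [y2 /and4P[y2x y21 _ _]] := fresh4 x y1 y1 y1 hn.
have y12 : y1 != y2 by rewrite eq_sym.
case/andP: (mE _ _ y1x y2x y12) => ne12 /set0Pn[c]; rewrite inE => /andP[c1 c2].
exists c => y yx; apply: contraT => cy.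
have [p pc E1] := two_set (cE _ y1x) c1.
have [r rc E2] := two_set (cE _ y2x) c2.
have pr : p != r by apply: contra ne12 => /eqP pr; rewrite E1 E2 pr.
have yy1 : y != y1 by apply: contraNneq cy => ->.
have yy2 : y != y2 by apply: contraNneq cy => ->.
have := mE _ _ yx y1x yy1; rewrite E1 => /andP[_ /meet2]; rewrite (negbTE cy) /= => py.
have := mE _ _ yx y2x yy2; rewrite E2 => /andP[_ /meet2]; rewrite (negbTE cy) /= => ry.
have Ey := two_set2 (cE _ yx) py ry pr.
have [y3 /and4P[y3x y31 y32 y3y]] := fresh4 x y1 y2 y hn.
have := mE _ _ y3x y1x y31; rewrite E1; case/andP=> n31 /meet2 m31.
have := mE _ _ y3x y2x y32; rewrite E2; case/andP=> n32 /meet2 m32.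
have := mE _ _ y3x yx y3y; rewrite Ey; case/andP=> n3y /meet2 m3y.
case: (boolP (c \in E y3)) => c3.
  have cp : c != p by rewrite eq_sym.
  have cr : c != r by rewrite eq_sym.
  case: (boolP (p \in E y3)) => p3.
    by move: n31; rewrite (two_set2 (cE _ y3x) c3 p3 cp) eqxx.
  rewrite (negbTE p3) /= in m3y.
  by move: n32; rewrite (two_set2 (cE _ y3x) c3 m3y cr) eqxx.
rewrite (negbTE c3) /= in m31 m32.
by move: n3y; rewrite (two_set2 (cE _ y3x) m31 m32 pr) eqxx.
Qed.

End Sets.


Section CT.
Variable n : nat.
Hypothesis hn : 5 <= n.
Variable phi : 'S_n -> 'S_n.
Hypothesis phiC : forall s, is3cycle s -> is3cycle (phi s).
Hypothesis phiA : forall s t, is3cycle s -> is3cycle t -> A (phi s) (phi t) = A s t.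
Hypothesis phiI : forall s t, is3cycle s -> is3cycle t -> phi s = phi t -> s = t.
Implicit Types s t u v w : 'S_n.
Implicit Types a b c d x y z p q : 'I_n.

Lemma phiS t : is3cycle t -> exists2 s, is3cycle s & phi s = t.
Proof.
move=> Ct; pose C3 := [set s : 'S_n | is3cycle s].
have E : phi @: C3 = C3.
  have ci : #|phi @: C3| = #|C3|.
    apply: card_in_imset => s1 s2 C1 C2; apply: phiI; [move: C1|move: C2]; by rewrite inE.
  apply/eqP; rewrite eqEcard ci leqnn andbT; apply/subsetP=> y /imsetP[s Cs ->].
  by rewrite /C3 !inE in Cs *; exact: phiC.
have : t \in phi @: C3 by rewrite E inE.
by case/imsetP=> s; rewrite inE => Cs ->; exists s.
Qed.

Lemma phi_eq s t : is3cycle s -> is3cycle t -> (phi s == phi t) = (s == t).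
Proof. by move=> Cs Ct; apply/eqP/eqP=> [|->//]; apply: phiI. Qed.

Lemma invchar s t : is3cycle s -> is3cycle t ->
  (t = s^-1) <-> (A s t /\ forall u, is3cycle u -> ~ (A s u /\ A t u)).
Proof.
move=> Cs Ct; split.
  move=> ->; split; first by apply/(adjP Cs (c3inv Cs)); left.
  by move=> u Cu; apply: CN1.
case=> Ast H; apply/eqP; apply: contraT => nt.
have [u [Cu Asu Atu]] := CN2 hn Cs Ct Ast nt.
by case: (H u Cu).
Qed.

Lemma phi_inv s : is3cycle s -> phi s^-1 = (phi s)^-1.
Proof.
move=> Cs; have Csi := c3inv Cs.
apply/(invchar (phiC Cs) (phiC Csi)); split.
  by rewrite phiA //; apply/(adjP Cs Csi); left.
move=> u' /phiS[u Cu <-]; rewrite !phiA //.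
exact: CN1.
Qed.

Lemma ARR x y : x != y -> exists x', exists y', x' != y' /\
  forall u, is3cycle u -> (u x == y) = (phi u x' == y').
Proof.
move=> xy.
have [q1 /and4P[q1x q1y _ _]] := fresh4 x y x y hn.
have [q2 /and4P[q2x q2y q21 _]] := fresh4 x y q1 q1 hn.
have yq1 : y != q1 by rewrite eq_sym.
have xq1 : x != q1 by rewrite eq_sym.
have yq2 : y != q2 by rewrite eq_sym.
have xq2 : x != q2 by rewrite eq_sym.
have Cs := c3_c3 xy yq1 xq1.
have Ct := c3_c3 xy yq2 xq2.
case: (c3_data xy yq1 xq1) => _ _ _ s0x s0y s0q _.
case: (c3_data xy yq2 xq2) => _ _ _ t0x t0y t0q _.
set s0 := c3 x y q1 in Cs s0x s0y s0q *.
set t0 := c3 x y q2 in Ct t0x t0y t0q *.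
have nts : t0 != s0.
  by apply/eqP=> E; move: t0y; rewrite E s0y => /eqP; rewrite eq_sym (negbTE q21).
have Ast : A s0 t0.
  by apply/(adjP Cs Ct); right; split=> //; exists x; rewrite t0x s0x eq_sym.
have ntsi : phi t0 != (phi s0)^-1.
  rewrite -phi_inv // phi_eq ?c3inv //; apply/eqP=> E.
  by move: (invP s0q); rewrite -E t0x => /eqP; rewrite (negbTE yq1).
have := Ast; rewrite -phiA // => /(adjP (phiC Cs) (phiC Ct)).
case=> [E | [nts' [x' [tx' sx']]]]; first by rewrite E eqxx in ntsi.
exists x', (phi s0 x'); split; first by rewrite eq_sym.
move=> u Cu.
have sx0 : s0 x != x by rewrite s0x eq_sym.
rewrite -s0x -(LINE Cs Ct Cu nts (etrans t0x (esym s0x)) sx0).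
rewrite -(LINE (phiC Cs) (phiC Ct) (phiC Cu) nts' tx' sx').
by rewrite !phi_eq // !phiA.
Qed.

Definition psiP x y (pq : 'I_n * 'I_n) :=
  (pq.1 != pq.2) && [forall u : 'S_n, is3cycle u ==> ((u x == y) == (phi u pq.1 == pq.2))].
Definition psi x y := odflt (x, y) [pick pq | psiP x y pq].
Definition f1 x y := (psi x y).1.
Definition f2 x y := (psi x y).2.

Lemma psiE x y : x != y -> psiP x y (psi x y).
Proof.
move=> xy; rewrite /psi; case: pickP => [pq //|].
have [x' [y' [xy' H]]] := ARR xy.
move=> /(_ (x', y')) /negbT /negP; case; rewrite /psiP /= xy' /=.
by apply/forallP=> u; apply/implyP=> Cu; rewrite (H u Cu).
Qed.

Lemma psi_ne x y : x != y -> f1 x y != f2 x y.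
Proof. by move/psiE=> /andP[]. Qed.

Lemma psi_spec x y u : x != y -> is3cycle u -> (u x == y) = (phi u (f1 x y) == f2 x y).
Proof. by move/psiE=> /andP[_ /forallP /(_ u) /implyP H] /H /eqP. Qed.

Lemma psi_rev x y : x != y -> f1 y x = f2 x y /\ f2 y x = f1 x y.
Proof.
move=> xy; have yx : y != x by rewrite eq_sym.
have ne' : f2 x y != f1 x y by rewrite eq_sym psi_ne.
suff H : forall v, is3cycle v -> v (f1 y x) = f2 y x -> v (f2 x y) = f1 x y.
  by have [-> ->] := KDET hn (psi_ne yx) ne' H.
move=> u' /phiS[u Cu <-] /eqP; rewrite -psi_spec // => /eqP uy.
have Cui := c3inv Cu.
have : u^-1 x == y by rewrite (invP uy).
rewrite psi_spec // phi_inv // => /eqP h.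
by rewrite -h permKV.
Qed.

Lemma psi_inj x y x' y' : x != y -> x' != y' -> psi x y = psi x' y' -> x = x' /\ y = y'.
Proof.
move=> xy xy' E.
suff H : forall v, is3cycle v -> v x' = y' -> v x = y.
  by have [-> ->] := KDET hn xy' xy H.
move=> u Cu /eqP; rewrite psi_spec // => h.
by apply/eqP; rewrite psi_spec // /f1 /f2 E.
Qed.

Definition Psi x y := [set f1 x y; f2 x y].

Lemma Psi_sym x y : x != y -> Psi y x = Psi x y.
Proof. by move=> xy; case: (psi_rev xy) => h1 h2; rewrite /Psi h1 h2 setUC. Qed.

Lemma Psi_card x y : x != y -> #|Psi x y| = 2.
Proof. by move=> xy; rewrite cards2 psi_ne. Qed.

Lemma Psi_inj x y x' y' : x != y -> x' != y' -> Psi x y = Psi x' y' ->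
  (x = x' /\ y = y') \/ (x = y' /\ y = x').
Proof.
move=> xy xy' E.
case: (set2_eq (psi_ne xy) (psi_ne xy') E) => [[h1 h2] | [h1 h2]].
  left; apply: psi_inj => //.
  by rewrite [psi x y]surjective_pairing [psi x' y']surjective_pairing; congr (_, _).
have yx' : y' != x' by rewrite eq_sym.
case: (psi_rev yx') => r1 r2.
have E' : psi x y = psi y' x'.
  rewrite [psi x y]surjective_pairing [psi y' x']surjective_pairing; congr (_, _).
    by rewrite -/(f1 x y) -/(f1 y' x') h1 r2.
  by rewrite -/(f2 x y) -/(f2 y' x') h2 r1.
by have [-> ->] := psi_inj xy yx' E'; right.
Qed.

Lemma arrow_supp v a b : v a = b -> a != b -> [set a; b] \subset supp v.
Proof.
move=> va ab; apply/subsetP=> z; rewrite !inE => /orP[] /eqP ->.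
  by rewrite va eq_sym.
by rewrite -va moved_img // va eq_sym.
Qed.

Lemma TRI x y z : x != y -> y != z -> x != z ->
  Psi x y :|: Psi y z :|: Psi x z \subset supp (phi (c3 x y z)).
Proof.
move=> xy yz xz; have Cu := c3_c3 xy yz xz.
case: (c3_data xy yz xz) => _ _ _ ux uy uz _.
have zx : z != x by rewrite eq_sym.
have h1 : phi (c3 x y z) (f1 x y) = f2 x y by apply/eqP; rewrite -psi_spec // ux.
have h2 : phi (c3 x y z) (f1 y z) = f2 y z by apply/eqP; rewrite -psi_spec // uy.
have h3 : phi (c3 x y z) (f1 z x) = f2 z x by apply/eqP; rewrite -psi_spec // uz.
have s1 : Psi x y \subset supp (phi (c3 x y z)) := arrow_supp h1 (psi_ne xy).
have s2 : Psi y z \subset supp (phi (c3 x y z)) := arrow_supp h2 (psi_ne yz).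
have s3 : Psi z x \subset supp (phi (c3 x y z)) := arrow_supp h3 (psi_ne zx).
apply/subUsetP; split; first by apply/subUsetP; split.
by rewrite -(Psi_sym xz).
Qed.

Lemma Psi_meet x y z : x != y -> x != z -> y != z -> Psi x y :&: Psi x z != set0.
Proof.
move=> xy xz yz; apply/negP=> /eqP I0.
have := cardsU (Psi x y) (Psi x z); rewrite I0 cards0 subn0 !Psi_card // => h.
have sub : Psi x y :|: Psi x z \subset supp (phi (c3 x y z)).
  apply: subset_trans (TRI xy yz xz).
  by apply/subsetP=> q; rewrite !in_setU => /orP[] ->; rewrite ?orbT.
have := subset_leq_card sub; rewrite h (c3_card (phiC (c3_c3 xy yz xz))).
by [].
Qed.

Lemma Psi_neq x y z : y != z -> x != y -> x != z -> Psi x y != Psi x z.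
Proof.
move=> yz xy xz; apply/eqP=> /(Psi_inj xy xz) [[_ E]|[E _]].
  by rewrite E eqxx in yz.
by rewrite E eqxx in xz.
Qed.

Lemma CPx x : exists c, forall y, y != x -> c \in Psi x y.
Proof.
apply: CP hn _ _.
  by move=> y yx; rewrite Psi_card // eq_sym.
move=> y z yx zx yz.
have xy : x != y by rewrite eq_sym.
have xz : x != z by rewrite eq_sym.
by rewrite Psi_neq // Psi_meet.
Qed.

Lemma CPb x : exists c, [forall y, (y != x) ==> (c \in Psi x y)].
Proof.
by have [c H] := CPx x; exists c; apply/forallP=> y; apply/implyP; apply: H.
Qed.

Definition sigf x := xchoose (CPb x).

Lemma sigP x y : y != x -> sigf x \in Psi x y.
Proof. by move=> yx; have /forallP/(_ y)/implyP := xchooseP (CPb x); apply. Qed.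

Lemma sig_inj : injective sigf.
Proof.
move=> a b E; apply/eqP; apply: contraT => ab.
have ba : b != a by rewrite eq_sym.
have [y /and4P[ya yb _ _]] := fresh4 a b a b hn.
have ay : a != y by rewrite eq_sym.
have by_ : b != y by rewrite eq_sym.
set P := sigf a.
have Pab : P \in Psi a b by apply: sigP.
have Pby : P \in Psi b y by rewrite /P E; apply: sigP.
have Pay : P \in Psi a y by apply: sigP.
have sub := TRI ab by_ ay.
have [r1 r1P E1] := two_set (Psi_card ab) Pab.
have [r2 r2P E2] := two_set (Psi_card by_) Pby.
have [r3 r3P E3] := two_set (Psi_card ay) Pay.
have r12 : r1 != r2.
  apply/eqP=> r; have : Psi a b = Psi b y by rewrite E1 E2 r.
  case/(Psi_inj ab by_) => [[e _]|[e _]]; first by rewrite e eqxx in ab.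
  by rewrite e eqxx in ay.
have r13 : r1 != r3.
  by apply/eqP=> r; move: (Psi_neq by_ ab ay); rewrite E1 E3 r eqxx.
have r23 : r2 != r3.
  apply/eqP=> r; have : Psi b y = Psi a y by rewrite E2 E3 r.
  case/(Psi_inj by_ ay) => [[e _]|[e _]]; first by rewrite e eqxx in ab.
  by rewrite e eqxx in by_.
have inS q : q \in Psi a b :|: Psi b y :|: Psi a y -> phi (c3 a b y) q != q.
  by move=> qin; have := subsetP sub q qin; rewrite inE.
have Pr1 : P != r1 by rewrite eq_sym.
have Pr2 : P != r2 by rewrite eq_sym.
have Pr3 : P != r3 by rewrite eq_sym.
apply: False_ind; apply: (c3_no4 (phiC (c3_c3 ab by_ ay)) Pr1 Pr2 Pr3 r12 r13 r23); apply: inS;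
  by rewrite ?E1 ?E2 ?E3 !inE eqxx ?orbT.
Qed.

Definition sigma : 'S_n := perm sig_inj.

Lemma sigmaE x : sigma x = sigf x.
Proof. by rewrite permE. Qed.

Lemma Psi_sig x y : x != y -> Psi x y = [set sigma x; sigma y].
Proof.
move=> xy; have yx : y != x by rewrite eq_sym.
apply: two_set2; first exact: Psi_card.
- by rewrite sigmaE; apply: sigP.
- by rewrite sigmaE -Psi_sym //; apply: sigP.
by rewrite (inj_eq perm_inj).
Qed.

Lemma psi_cases x y : x != y ->
  (f1 x y = sigma x /\ f2 x y = sigma y) \/ (f1 x y = sigma y /\ f2 x y = sigma x).
Proof.
move=> xy; apply: set2_eq; first exact: psi_ne.
  by rewrite (inj_eq perm_inj).
exact: Psi_sig.
Qed.

Definition delta x y := f1 x y == sigma x.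

Lemma delta_tri x y z : x != y -> y != z -> x != z -> delta x y = delta y z.
Proof.
move=> xy yz xz; have Cu := c3_c3 xy yz xz.
case: (c3_data xy yz xz) => _ _ _ ux uy uz _.
have h1 : phi (c3 x y z) (f1 x y) = f2 x y by apply/eqP; rewrite -psi_spec // ux.
have h2 : phi (c3 x y z) (f1 y z) = f2 y z by apply/eqP; rewrite -psi_spec // uy.
have sxy : sigma x != sigma y by rewrite (inj_eq perm_inj).
have syz : sigma y != sigma z by rewrite (inj_eq perm_inj).
have sxz : sigma x != sigma z by rewrite (inj_eq perm_inj).
rewrite /delta.
case: (psi_cases xy) => [[a1 a2]|[a1 a2]]; case: (psi_cases yz) => [[b1 b2]|[b1 b2]];
  rewrite a1 b1 ?eqxx // ?(negbTE sxy) ?(negbTE syz) ?(eq_sym (sigma y)) ?(negbTE sxy) ?(negbTE syz) //.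
- exfalso; move: h1 h2; rewrite a1 a2 b1 b2 => h1 h2.
  by move: (perm_inj (etrans h1 (esym h2))) => /eqP; rewrite (negbTE sxz).
- exfalso; move: h1 h2; rewrite a1 a2 b1 b2 => h1 h2.
  by move: (etrans (esym h1) h2) => /eqP; rewrite (negbTE sxz).
by rewrite eq_sym (negbTE syz).
Qed.

Lemma delta_sym x y : x != y -> delta y x = delta x y.
Proof.
move=> xy; have sxy : sigma x != sigma y by rewrite (inj_eq perm_inj).
rewrite /delta; case: (psi_rev xy) => -> _.
case: (psi_cases xy) => [[a1 a2]|[a1 a2]]; rewrite a1 a2 ?eqxx //.
Qed.

Lemma delta_L1 a b c : b != a -> c != a -> delta a b = delta a c.
Proof.
move=> ba ca; case: (eqVneq b c) => [->//|bc].
have ac : a != c by rewrite eq_sym.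
have ab : a != b by rewrite eq_sym.
have cb : c != b by rewrite eq_sym.
rewrite -(delta_tri ca ab cb).
by rewrite delta_sym.
Qed.

Lemma delta_const a b c d : a != b -> c != d -> delta a b = delta c d.
Proof.
move=> ab cd; have ba : b != a by rewrite eq_sym.
have dc : d != c by rewrite eq_sym.
case: (eqVneq c a) => [e|ca]; first by rewrite e; apply: delta_L1 => //; rewrite -e.
have ac : a != c by rewrite eq_sym.
rewrite (delta_L1 ba ca) -(delta_sym ac).
by apply: delta_L1; rewrite // eq_sym.
Qed.

Definition eps := [exists a, exists b, (a != b) && ~~ delta a b].

Lemma deltaE a b : a != b -> delta a b = ~~ eps.
Proof.
move=> ab; rewrite /eps; case: existsP => [[a0 /existsP[b0 /andP[ab0 nd]]]|ne] /=.
  by rewrite (delta_const ab ab0) (negbTE nd).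
apply: contraT => nd; case: ne; exists a; apply/existsP; exists b.
by rewrite ab.
Qed.

Lemma conj_app (s g : 'S_n) p : (s ^ g) (g p) = g (s p).
Proof. by rewrite conjgE !permM permK. Qed.

Lemma c3_conj s g : is3cycle s -> is3cycle (s ^ g).
Proof.
move=> /c3E3[a [b [c [ab bc ac sa sb sc fx]]]].
apply: (@c3I _ _ (g a) (g b) (g c)); constructor;
  rewrite ?(inj_eq perm_inj) ?conj_app ?sa ?sb ?sc //.
move=> p pa pb pc; rewrite -(permKV g p) conj_app fx //.
- by apply: contra pa => /eqP <-; rewrite permKV.
- by apply: contra pb => /eqP <-; rewrite permKV.
by apply: contra pc => /eqP <-; rewrite permKV.
Qed.

Lemma CT_main u : is3cycle u -> phi u = if eps then (u ^ sigma)^-1 else u ^ sigma.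
Proof.
move=> Cu; have [a [b [c [ab bc ac ua ub uc fx]]]] := c3E3 Cu.
have ca : c != a by rewrite eq_sym.
have hab : phi u (f1 a b) = f2 a b by apply/eqP; rewrite -psi_spec // ua.
have hbc : phi u (f1 b c) = f2 b c by apply/eqP; rewrite -psi_spec // ub.
have hca : phi u (f1 c a) = f2 c a by apply/eqP; rewrite -psi_spec // uc.
have sab : sigma a != sigma b by rewrite (inj_eq perm_inj).
have sbc : sigma b != sigma c by rewrite (inj_eq perm_inj).
have sca : sigma c != sigma a by rewrite (inj_eq perm_inj).
have Cc := c3_conj sigma Cu.
have ca1 : (u ^ sigma) (sigma a) = sigma b by rewrite conj_app ua.
have cb1 : (u ^ sigma) (sigma b) = sigma c by rewrite conj_app ub.
have cc1 : (u ^ sigma) (sigma c) = sigma a by rewrite conj_app uc.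
case: eps (deltaE ab) (deltaE bc) (deltaE ca) => /= dab dbc dca.
  have [[e1 e2]|[e1 e2]] := psi_cases ab.
    by move: dab; rewrite /delta e1 eqxx.
  have [[g1 g2]|[g1 g2]] := psi_cases ca.
    by move: dca; rewrite /delta g1 eqxx.
  rewrite e1 e2 in hab; rewrite g1 g2 in hca.
  have ia : (u ^ sigma)^-1 (sigma b) = sigma a by apply: invP.
  have ic : (u ^ sigma)^-1 (sigma a) = sigma c by apply: invP.
  apply: (@c3_eq _ _ _ (sigma b) (c3inv Cc) (phiC Cu)); rewrite ?ia ?ic ?hab ?hca //.
have [[e1 e2]|[e1 e2]] := psi_cases ab; last first.
  by move: dab; rewrite /delta e1 eq_sym (negbTE sab).
have [[g1 g2]|[g1 g2]] := psi_cases bc; last first.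
  by move: dbc; rewrite /delta g1 eq_sym (negbTE sbc).
rewrite e1 e2 in hab; rewrite g1 g2 in hbc.
apply: (@c3_eq _ _ _ (sigma a) Cc (phiC Cu)); rewrite ?ca1 ?cb1 ?hab ?hbc //; by rewrite eq_sym.
Qed.

End CT.

Theorem CT_exists n (hn : 5 <= n) (phi : 'S_n -> 'S_n) :
  (forall s, is3cycle s -> is3cycle (phi s)) ->
  (forall s t, is3cycle s -> is3cycle t -> A (phi s) (phi t) = A s t) ->
  (forall s t, is3cycle s -> is3cycle t -> phi s = phi t -> s = t) ->
  exists sg : 'S_n, exists e : bool, forall u, is3cycle u ->
    phi u = if e then (u ^ sg)^-1 else u ^ sg.
Proof.
move=> phiC phiA phiI.
exists (sigma hn phiC phiA phiI), (eps hn phiC phiA phiI) => u Cu.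
exact: CT_main.
Qed.


Section Fix.
Variable n : nat.
Hypothesis hn : 5 <= n.
Implicit Types s t u v w : 'S_n.
Implicit Types a b c d x y z p q : 'I_n.

Lemma fix_e0 (sg : 'S_n) x y :
  (forall v, is3cycle v -> v x = y -> v ^ sg = v) ->
  forall v, is3cycle v -> v x = y -> v (sg x) = sg y.
Proof. by move=> H v Cv vx; rewrite -{1}(H v Cv vx) conj_app vx. Qed.

Lemma fix_e1 (sg : 'S_n) x y :
  (forall v, is3cycle v -> v x = y -> (v ^ sg)^-1 = v) ->
  forall v, is3cycle v -> v x = y -> v (sg y) = sg x.
Proof.
move=> H v Cv vx; rewrite -{1}(H v Cv vx) -vx -(conj_app v sg x).
by rewrite permK.
Qed.

Lemma fix_id (sg : 'S_n) (e : bool) w : is3cycle w ->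
  (forall v, is3cycle v -> (v == w) || A w v ->
     (if e then (v ^ sg)^-1 else v ^ sg) = v) -> e = false /\ sg = 1.
Proof.
move=> Cw H.
have [a [b [c [ab bc ac wa wb wc fx]]]] := c3E3 Cw.
have arr x : w x != x -> forall v, is3cycle v -> v x = w x ->
    (if e then (v ^ sg)^-1 else v ^ sg) = v.
  move=> wx v Cv vx; apply: H => //.
  case: (eqVneq v w) => //= vw.
  by apply/(adjP Cw Cv); right; split=> //; exists x.
have wa' : w a != a by rewrite wa eq_sym.
have wb' : w b != b by rewrite wb eq_sym.
have ba : b != a by rewrite eq_sym.
have cb : c != b by rewrite eq_sym.
have sab : sg a != sg b by rewrite (inj_eq perm_inj).
have sbc : sg b != sg c by rewrite (inj_eq perm_inj).
move: arr; clear H; case: e => arr.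
  have h1 := fix_e1 (fun v Cv vx => arr a wa' v Cv (etrans vx (esym wa))).
  have h2 := fix_e1 (fun v Cv vx => arr b wb' v Cv (etrans vx (esym wb))).
  have sba : sg b != sg a by rewrite eq_sym.
  have scb : sg c != sg b by rewrite eq_sym.
  have [e1 _] := KDET hn ab sba h1.
  have [_ e2] := KDET hn bc scb h2.
  by move: ac; rewrite -e1 -e2 eqxx.
have h1 := fix_e0 (fun v Cv vx => arr a wa' v Cv (etrans vx (esym wa))).
have h2 := fix_e0 (fun v Cv vx => arr b wb' v Cv (etrans vx (esym wb))).
have [ea eb] := KDET hn ab sab h1.
have [_ ec] := KDET hn bc sbc h2.
split=> //; apply/permP=> q; rewrite perm1.
case: (eqVneq q a) => [->//|qa]; case: (eqVneq q b) => [->//|qb].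
have bq : b != q by rewrite eq_sym.
have aq : a != q by rewrite eq_sym.
have Cv := c3_c3 ab bq aq; case: (c3_data ab bq aq) => _ _ _ va vb vq _.
have := h1 _ Cv va.
have /arr H2 := wa'; have := H2 _ Cv (etrans va (esym wa)) => /= E.
have : (c3 a b q) (sg q) = sg a by rewrite -{1}E conj_app vq.
by rewrite ea -{2}vq => /perm_inj.
Qed.

End Fix.


Section Gen.
Variable n : nat.
Hypothesis hn : 5 <= n.

Definition C3 := [set s : 'S_n | is3cycle s].

Lemma C3_conj (g : 'S_n) : C3 :^ g \subset C3.
Proof.
apply/subsetP=> x /imsetP[s]; rewrite !inE => Cs ->.
exact: c3_conj.
Qed.

Lemma ex3 : exists s : 'S_n, is3cycle s.
Proof.
pose x0 : 'I_n := @Ordinal n 0 (leq_trans (isT : 0 < 5) hn).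
have [a _] := fresh4 x0 x0 x0 x0 hn.
have [b /and4P[ba _ _ _]] := fresh4 a a a a hn.
have [c /and4P[ca cb _ _]] := fresh4 a b b b hn.
have ab : a != b by rewrite eq_sym.
by exists (c3 a b c); apply: c3_c3; rewrite // eq_sym.
Qed.

Lemma gen3 : <<C3>> = 'Alt_('I_n).
Proof.
have sub : <<C3>> \subset 'Alt_('I_n).
  by rewrite gen_subG; apply/subsetP=> s; rewrite inE; apply: c3_odd.
have nrm : 'Alt_('I_n) \subset 'N(<<C3>>).
  apply: norms_gen; apply/subsetP=> g _; rewrite inE; exact: C3_conj.
have simp : simple 'Alt_('I_n) by apply: simple_Alt5; rewrite card_ord.
case/simpleP: simp => _ /(_ [group of <<C3>>]) [].
- by rewrite /normal sub nrm.
- move=> /= E; have [s Cs] := ex3.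
  have : s \in <<C3>> by apply: mem_gen; rewrite inE.
  rewrite E inE => /eqP s1; move: Cs; rewrite s1.
  by move/negP: (@c3_not1 n).
by [].
Qed.

End Gen.


Section VW.
Variable n : nat.
Hypothesis hn : 5 <= n.
Local Notation V := (V n).
Local Notation Alt := ('Alt_('I_n))%G.

Definition sub3 (s : 'S_n) : V := subg Alt s.

Lemma sub3K s : s \in Alt -> sgval (sub3 s) = s.
Proof. exact: subgK. Qed.

Lemma sgvalM (x y : V) : sgval (x * y) = sgval x * sgval y. Proof. by []. Qed.
Lemma sgvalV (x : V) : sgval x^-1 = (sgval x)^-1. Proof. by []. Qed.
Lemma sgval1 : sgval (1 : V) = 1. Proof. by []. Qed.
Lemma sgval_inj : injective (@sgval _ Alt).
Proof. exact: subg_inj. Qed.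

Lemma adjE (x y : V) : cag_adj x y = A (sgval x) (sgval y).
Proof. by []. Qed.

Lemma c3_conjE (s g : 'S_n) : is3cycle (s ^ g) = is3cycle s.
Proof.
apply/idP/idP; last exact: c3_conj.
by move/(c3_conj g^-1); rewrite -conjgM mulgV conjg1.
Qed.

Lemma CAGP (f : {perm V}) :
  reflect (forall x y, cag_adj (f x) (f y) = cag_adj x y) (f \in CAGAut n).
Proof.
rewrite inE; apply: (iffP forallP) => [H x y | H x].
  by have /forallP/(_ y)/eqP := H x.
by apply/forallP=> y; rewrite H.
Qed.

Lemma CAG_group : group_set (CAGAut n).
Proof.
apply/group_setP; split; first by apply/CAGP=> x y; rewrite !perm1.
move=> f g /CAGP Hf /CAGP Hg; apply/CAGP=> x y.
by rewrite !permM Hg Hf.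
Qed.

Canonical CAGg := Group CAG_group.

Definition rho (g : V) : {perm V} := perm (mulIg g).
Lemma rhoE g x : rho g x = x * g. Proof. by rewrite permE. Qed.
Lemma rhoM : {morph rho : g h / g * h}.
Proof. by move=> g h; apply/permP=> x; rewrite permM !rhoE mulgA. Qed.
Lemma rho1 : rho 1 = 1.
Proof. by apply/permP=> x; rewrite rhoE perm1 mulg1. Qed.

Definition rhoMo : {morphism [set: V] >-> {perm V}} :=
  @Morphism _ _ [set: V] rho (in2W rhoM).

Lemma rho_inj : 'injm rhoMo.
Proof.
apply/injmP=> g h _ _ /= E.
by have := congr1 (fun f : {perm V} => f 1) E; rewrite /= !rhoE !mul1g.
Qed.

Lemma rho_CAG g : rho g \in CAGAut n.
Proof.
apply/CAGP=> x y; rewrite !rhoE !adjE /A !sgvalM invMg mulgA.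
by rewrite mulgK.
Qed.

Lemma conjV_alt (s : 'S_n) (x : V) : sgval x ^ s \in Alt.
Proof.
have sN : s \in 'N(Alt) by apply: (subsetP (Alt_norm _)); rewrite inE.
by rewrite memJ_norm // subgP.
Qed.

Definition conjV (s : 'S_n) (x : V) : V := sub3 (sgval x ^ s).
Lemma conjVE s x : sgval (conjV s x) = sgval x ^ s.
Proof. by rewrite sub3K // conjV_alt. Qed.
Lemma conjV_inj s : injective (conjV s).
Proof.
move=> x y E; apply: sgval_inj; have := congr1 (@sgval _ _) E.
by rewrite !conjVE; apply: conjg_inj.
Qed.
Lemma conjVM s x y : conjV s (x * y) = conjV s x * conjV s y.
Proof. by apply: sgval_inj; rewrite sgvalM !conjVE sgvalM conjMg. Qed.

Definition kap (s : 'S_n) : {perm V} := perm (@conjV_inj s).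
Lemma kapE s x : kap s x = conjV s x. Proof. by rewrite permE. Qed.
Lemma kapM : {morph kap : s t / s * t}.
Proof.
move=> s t; apply/permP=> x; rewrite permM !kapE.
by apply: sgval_inj; rewrite !conjVE conjgM.
Qed.

Definition kapMo : {morphism [set: 'S_n] >-> {perm V}} :=
  @Morphism _ _ [set: 'S_n] kap (in2W kapM).

Lemma kap_CAG s : kap s \in CAGAut n.
Proof.
apply/CAGP=> x y; rewrite !kapE !adjE /A !conjVE -conjVg -conjMg.
exact: c3_conjE.
Qed.

Lemma hinvE (x : V) : hinv n x = x^-1.
Proof. by rewrite permE. Qed.

Lemma hinv_CAG : hinv n \in CAGAut n.
Proof.
apply/CAGP=> x y; rewrite !hinvE !adjE /A.
have -> : sgval y^-1 * (sgval x^-1)^-1 = ((sgval y * (sgval x)^-1)^-1) ^ (sgval x).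
  rewrite !sgvalV invgK conjgE invMg !invgK !mulgA mulVg mul1g.
  by [].
by rewrite c3_conjE c3invE.
Qed.

Lemma adj1 (v : V) : cag_adj 1 v = is3cycle (sgval v).
Proof. by rewrite adjE /A sgval1 invg1 mulg1. Qed.

Lemma CT_V (k : {perm V}) : k \in CAGAut n -> k 1 = 1 ->
  exists sg : 'S_n, exists e : bool, forall u, is3cycle u ->
    sgval (k (sub3 u)) = if e then (u ^ sg)^-1 else u ^ sg.
Proof.
move=> /CAGP kA k1.
apply: (CT_exists hn).
- by move=> s Cs; rewrite -adj1 -k1 kA adj1 sub3K //; exact: c3_odd.
- by move=> s t Cs Ct; rewrite -adjE kA adjE !sub3K //; exact: c3_odd.
move=> s t Cs Ct /sgval_inj /perm_inj E.
by rewrite -(sub3K (c3_odd Cs)) -(sub3K (c3_odd Ct)) E.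
Qed.

Lemma sub31 : sub3 1 = 1.
Proof. by apply: sgval_inj; rewrite sub3K ?group1. Qed.

Lemma sub3M s t : s \in Alt -> t \in Alt -> sub3 (s * t) = sub3 s * sub3 t.
Proof. by move=> sA tA; apply: sgval_inj; rewrite sgvalM !sub3K ?groupM. Qed.

Lemma sgvalK' (x : V) : sub3 (sgval x) = x.
Proof. by apply: sgval_inj; rewrite sub3K // subgP. Qed.

Lemma CL (g : {perm V}) : g \in CAGAut n -> g 1 = 1 ->
  (forall t : V, is3cycle (sgval t) -> g t = t) -> g = 1.
Proof.
move=> gA g1 gC.
pose P := [set x : V | (g x == x) && [forall t : V, cag_adj x t ==> (g t == t)]].
have adjT (x t : V) : t = sub3 (sgval t * (sgval x)^-1) * x.
  apply: sgval_inj; rewrite sgvalM sub3K ?mulgKV //.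
  by rewrite -sgvalV -sgvalM subgP.
have step x s : x \in P -> is3cycle s -> sub3 s * x \in P.
  rewrite inE => /andP[/eqP gx /forallP gN] Cs.
  have Sa : s \in Alt := c3_odd Cs.
  set y := sub3 s * x.
  have xy : cag_adj x y by rewrite adjE /A sgvalM sub3K // mulgK.
  have gy : g y = y by apply/eqP; exact: (implyP (gN y) xy).
  pose k := rho y * g * rho y^-1.
  have kA : k \in CAGAut n by rewrite !groupM ?rho_CAG.
  have kE z : k z = g (z * y) * y^-1 by rewrite !permM !rhoE.
  have k1 : k 1 = 1 by rewrite kE mul1g gy mulgV.
  have [sg [e He]] := CT_V kA k1.
  have Csi := c3inv Cs.
  have [e0 sg1] : e = false /\ sg = 1.
    apply: (fix_id hn Csi) => v Cv /orP H'.
    rewrite -He //.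
    suff -> : k (sub3 v) = sub3 v by rewrite sub3K // c3_odd.
    rewrite kE; case: H' => [/eqP -> | Av].
      have -> : sub3 s^-1 * y = x.
        by apply: sgval_inj; rewrite !sgvalM !sub3K ?groupV // mulgA mulVg mul1g.
      rewrite gx; apply: sgval_inj; rewrite sgvalM sgvalV sgvalM sub3K ?groupV //.
      by rewrite invMg mulgA mulgV mul1g sub3K ?groupV.
    have xv : cag_adj x (sub3 v * y).
      rewrite adjE /A !sgvalM sub3K ?c3_odd // sub3K // mulgA mulgK.
      by move: Av; rewrite /A invgK.
    by rewrite (eqP (implyP (gN _) xv)) mulgK.
  rewrite e0 sg1 in He.
  rewrite inE gy eqxx /=; apply/forallP=> t; apply/implyP=> yt.
  have Cu : is3cycle (sgval t * (sgval y)^-1) by move: yt; rewrite adjE /A.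
  have ku : k (sub3 (sgval t * (sgval y)^-1)) = sub3 (sgval t * (sgval y)^-1).
    by apply: sgval_inj; rewrite He // conjg1 sub3K // c3_odd.
  move: (kE (sub3 (sgval t * (sgval y)^-1))); rewrite ku -adjT => E.
  by rewrite {2}(adjT y t) E mulgKV.
have P1 : (1 : V) \in P.
  rewrite inE g1 eqxx /=; apply/forallP=> t; apply/implyP; rewrite adj1 => Ct.
  by rewrite gC.
pose Q := [set s in Alt | [forall x in P, sub3 s * x \in P]].
have Qg : group_set Q.
  apply/group_setP; split.
    by apply/setIdP; split; rewrite ?group1 //; apply/forallP=> x; apply/implyP; rewrite sub31 mul1g.
  move=> s t /setIdP[sA /forallP sP] /setIdP[tA /forallP tP].
  apply/setIdP; split; first exact: groupM.
  apply/forallP=> x; apply/implyP=> xP.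
  rewrite sub3M // -mulgA; apply: (implyP (sP _)); exact: (implyP (tP _)).
have AQ : 'Alt_('I_n) \subset Q.
  rewrite -(gen3 hn) (@gen_subG _ _ (Group Qg)); apply/subsetP=> s; rewrite in_set => Cs.
  apply/setIdP; split; first exact: c3_odd. apply/forallP=> x; apply/implyP=> xP; exact: step.
apply/permP=> x; rewrite perm1.
have : sgval x \in Q by apply: (subsetP AQ); exact: subgP.
case/setIdP=> _ /forallP/(_ 1)/implyP/(_ P1).
by rewrite mulg1 sgvalK' in_set => /andP[/eqP].
Qed.

End VW.


Section Fin.
Variable n : nat.
Hypothesis hn : 5 <= n.
Local Notation V := (V n).

Lemma rho_in (g : V) : rho g \in rhoMo n @* [set: V].
Proof. by apply: (mem_morphim (rhoMo n)); rewrite inE. Qed.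

Lemma kap_in (s : 'S_n) : kap s \in kapMo n @* [set: 'S_n].
Proof. by apply: (mem_morphim (kapMo n)); rewrite inE. Qed.

Lemma RA_eq : RA n = rhoMo n @* [set: V].
Proof.
apply/setP=> f; rewrite morphimEdom inE; apply/existsP/imsetP.
  case=> g /forallP H; exists g; rewrite ?inE //.
  by apply/permP=> x; rewrite /= rhoE; apply/eqP.
by case=> g _ ->; exists g; apply/forallP=> x; rewrite /= rhoE.
Qed.

Lemma InnS_eq : InnS n = kapMo n @* [set: 'S_n].
Proof.
apply/setP=> f; rewrite morphimEdom inE; apply/existsP/imsetP.
  case=> s /forallP H; exists s; rewrite ?inE //.
  apply/permP=> x; rewrite /= kapE; apply: sgval_inj; rewrite conjVE.
  exact/eqP.
by case=> s _ ->; exists s; apply/forallP=> x; rewrite /= kapE conjVE.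
Qed.

Lemma conjV1 (s : 'S_n) : conjV s (1 : V) = 1.
Proof. by apply: sgval_inj; rewrite conjVE sgval1 conj1g. Qed.

Lemma conjVV (s : 'S_n) (x : V) : conjV s x^-1 = (conjV s x)^-1.
Proof. by apply: sgval_inj; rewrite sgvalV !conjVE sgvalV conjVg. Qed.

Lemma kap_inj : 'injm (kapMo n).
Proof.
apply/injmP=> s t _ _ /= E.
have [w Cw] := ex3 hn.
have H : forall v, is3cycle v -> (v == w) || A w v ->
    (if false then (v ^ (s * t^-1))^-1 else v ^ (s * t^-1)) = v.
  move=> v Cv _ /=.
  have := congr1 (fun f : {perm V} => sgval (f (sub3 v))) E.
  rewrite /= !kapE !conjVE sub3K ?c3_odd // => e.
  by rewrite conjgM e conjgK.
have [_ /eqP] := @fix_id n hn (s * t^-1) false w Cw H.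
by rewrite -eq_mulgV1 => /eqP.
Qed.

Lemma hinvV : (hinv n)^-1 = hinv n.
Proof.
apply/permP=> x; apply: (@perm_inj _ (hinv n)).
by rewrite permKV !hinvE invgK.
Qed.

Lemma h_ne1 : hinv n != 1.
Proof.
have [w Cw] := ex3 hn.
apply/eqP=> E; have := congr1 (fun f : {perm V} => sgval (f (sub3 w))) E.
rewrite /= hinvE perm1 sgvalV sub3K ?c3_odd // => e.
have [a [b [c [ab bc ac wa wb wc _]]]] := c3E3 Cw.
have := invP wc; rewrite e wa => /eqP.
by rewrite (negbTE bc).
Qed.

Lemma h_order : #[hinv n] = 2.
Proof.
have d : #[hinv n] %| 2.
  rewrite order_dvdn expgS expg1; apply/eqP; apply/permP=> x.
  by rewrite permM perm1 !hinvE invgK.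
have g1 : 1 < #[hinv n] by rewrite order_gt1 h_ne1.
apply/eqP; rewrite eqn_leq g1 andbT.
exact: dvdn_leq d.
Qed.

Local Notation RAg := (rhoMo n @* [set: V])%G.
Local Notation Ig := (kapMo n @* [set: 'S_n])%G.

Lemma kapM' (s : 'S_n) (x y : V) : kap s (x * y) = kap s x * kap s y.
Proof. by rewrite !kapE conjVM. Qed.

Lemma nRI : Ig \subset 'N(RAg).
Proof.
apply/subsetP=> k /morphimP[s _ _ ->]; rewrite inE.
apply/subsetP=> r /imsetP[r0 /morphimP[g _ _ ->] ->].
have -> : rho g ^ kap s = rho (conjV s g).
  apply/permP=> x; rewrite conjgE !permM rhoE kapM' permKV rhoE.
  by rewrite kapE.
exact: rho_in.
Qed.

Lemma tiRI : RAg :&: Ig = 1.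
Proof.
apply/trivgP/subsetP=> k /setIP[/morphimP[g _ _ ->] /morphimP[s _ _ E]].
have := congr1 (fun f : {perm V} => f 1) E; rewrite /= rhoE kapE mul1g conjV1 => ->.
by rewrite rho1 inE.
Qed.

Lemma G1E : RAg <*> Ig = RAg * Ig.
Proof. by rewrite -(sdprodEY nRI tiRI) (sdprodE nRI tiRI). Qed.

Lemma conjV_sgval (g x : V) : conjV (sgval g) x = x ^ g.
Proof. by apply: sgval_inj; rewrite conjVE. Qed.

Lemma nG1h : <[hinv n]> \subset 'N(RAg <*> Ig).
Proof.
rewrite cycle_subG inE /joing -genJ gen_subG conjUg subUset.
apply/andP; split; apply/subsetP=> r /imsetP[r0 /morphimP[g _ _ ->] ->].
  have -> : rho g ^ hinv n = kap (sgval g) * rho g^-1.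
    apply/permP=> x; rewrite conjgE hinvV !permM !rhoE !hinvE kapE conjV_sgval.
    by rewrite invMg invgK conjgE mulgA mulgK.
  apply: groupM; apply: mem_gen; rewrite inE ?rho_in ?kap_in ?orbT //.
have -> : kap g ^ hinv n = kap g.
  apply/permP=> x; rewrite conjgE hinvV !permM !hinvE !kapE conjVV.
  by rewrite invgK.
by apply: mem_gen; rewrite inE kap_in orbT.
Qed.

Lemma h_notin : hinv n \notin RAg <*> Ig.
Proof.
rewrite G1E; apply/negP=> /mulsgP[r k /morphimP[g _ _ ->] /morphimP[s _ _ ->] E].
have hx (x : V) : x^-1 = conjV s (x * g).
  by have := congr1 (fun f : {perm V} => f x) E; rewrite /= hinvE permM rhoE kapE.
have g1 : g = 1.
  by apply: (@conjV_inj _ s); rewrite conjV1 -[g]mul1g -hx invg1.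
have hx' (x : V) : x^-1 = conjV s x by rewrite hx g1 mulg1.
pose x0 : 'I_n := @Ordinal n 0 (leq_trans (isT : 0 < 5) hn).
have [a _] := fresh4 x0 x0 x0 x0 hn.
have [b /and4P[ba _ _ _]] := fresh4 a a a a hn.
have [c /and4P[ca cb _ _]] := fresh4 a b b b hn.
have [d /and4P[da db dc _]] := fresh4 a b c c hn.
have ab : a != b by rewrite eq_sym.
have bc : b != c by rewrite eq_sym.
have ac : a != c by rewrite eq_sym.
have bd : b != d by rewrite eq_sym.
have ad : a != d by rewrite eq_sym.
have C1 := c3_c3 ab bc ac; have C2 := c3_c3 ab bd ad.
have [_ _ _ u1a u1b _ _] := c3_data ab bc ac.
have [_ _ _ u2a u2b _ _] := c3_data ab bd ad.
set X := sub3 (c3 a b c); set Y := sub3 (c3 a b d).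
have XY : Y^-1 * X^-1 = X^-1 * Y^-1.
  by rewrite -invMg (hx' (X * Y)) conjVM -!hx'.
have : X * Y = Y * X.
  by apply: (@invg_inj V); rewrite !invMg XY.
move/(congr1 (fun z : V => sgval z a)); rewrite /= !permM !sub3K ?c3_odd //.
by rewrite u1a u2a u2b u1b => /eqP; rewrite (negbTE dc).
Qed.

Lemma tiG1h : (RAg <*> Ig) :&: <[hinv n]> = 1.
Proof.
rewrite setIC; apply: prime_TIg; first by rewrite -orderE h_order.
by rewrite cycle_subG h_notin.
Qed.

Lemma sub_CAG : (RAg <*> Ig) <*> <[hinv n]> \subset CAGAut n.
Proof.
rewrite !(@join_subG _ _ _ (CAGg n)) cycle_subG hinv_CAG andbT.
apply/andP; split; apply/subsetP=> f /morphimP[x _ _ ->].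
  exact: rho_CAG.
exact: kap_CAG.
Qed.

Lemma CAG_sub : CAGAut n \subset (RAg <*> Ig) <*> <[hinv n]>.
Proof.
apply/subsetP=> f fA.
set J := (RAg <*> Ig) <*> <[hinv n]>.
have inJR g : rho g \in J.
  by apply: mem_gen; rewrite inE; apply/orP; left; apply: mem_gen; rewrite inE rho_in.
have inJK s : kap s \in J.
  by apply: mem_gen; rewrite inE; apply/orP; left; apply: mem_gen; rewrite inE kap_in orbT.
have inJh : hinv n \in J by apply: mem_gen; rewrite inE cycle_id orbT.
set c := f 1.
set f1 := f * rho c^-1.
have f1A : f1 \in CAGAut n by rewrite groupM ?rho_CAG.
have f11 : f1 1 = 1 by rewrite permM rhoE mulgV.
have [sg [e He]] := CT_V hn f1A f11.
set tau := kap sg * (if e then hinv n else 1).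
have tauA : tau \in CAGAut n.
  by rewrite groupM ?kap_CAG //; case: (e); rewrite ?hinv_CAG ?group1.
have tauE (x : V) : tau x = if e then (conjV sg x)^-1 else conjV sg x.
  by rewrite permM kapE; case: (e); rewrite ?hinvE ?perm1.
set g' := f1 * tau^-1.
have g'A : g' \in CAGAut n by rewrite groupM ?groupV.
have g'1 : g' 1 = 1.
  rewrite permM f11; apply: (@perm_inj _ tau); rewrite permKV tauE conjV1.
  by case: (e); rewrite ?invg1.
have g'C (t : V) : is3cycle (sgval t) -> g' t = t.
  move=> Ct; rewrite permM; apply: (@perm_inj _ tau); rewrite permKV.
  rewrite -(sgvalK' t); apply: sgval_inj; rewrite He // tauE.
  by case: (e); rewrite ?sgvalV sgvalK' conjVE.
have := CL hn g'A g'1 g'C => /eqP; rewrite -eq_mulgV1 => /eqP f1tau.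
have -> : f = tau * rho c.
  by rewrite -f1tau /f1 -mulgA -rhoM mulVg rho1 mulg1.
rewrite groupM ?inJR //; rewrite groupM ?inJK //.
by case: (e); rewrite ?inJh ?group1.
Qed.

End Fin.

Theorem theorem3p1 (n : nat) (hn : 5 <= n) :
  [/\ (RA n ><| InnS n) ><| <[hinv n]> = CAGAut n,
      RA n \isog 'Alt_('I_n),
      InnS n \isog 'Sym_('I_n) &
      #[hinv n] = 2].
Proof.
rewrite RA_eq InnS_eq (sdprodEY (nRI n) (tiRI n)) (sdprodEY (nG1h n) (tiG1h hn)).
split.
- by apply/eqP; rewrite eqEsubset sub_CAG CAG_sub.
- have i1 := sub_isog (subxx [set: V n]) (rho_inj n).
  have i2 := isog_subg ('Alt_('I_n))%G.
  exact: isog_symr (isog_trans i2 i1).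
- have i1 := sub_isog (subxx [set: 'S_n]) (kap_inj hn).
  exact: isog_symr i1.
exact: h_order.
Qed.
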